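(* Consider the setting and algorithm described in the context, with a starting point satisfying $x^0\in\mathcal{S}$. Then there exist two positive scalars $m$ and $M$ such that $m<f(Kx^k)\le M$ for all $k\ge0$.
   Context: Setting: $\mathcal{S}\subseteq\mathbb{R}^n$ is nonempty, convex and compact; $A:\mathbb{R}^n\to\mathbb{R}^s$, $K:\mathbb{R}^n\to\mathbb{R}^p$ linear; $g:\mathbb{R}^s\to\mathbb{R}\cup\{+\infty\}$ proper, convex, lsc; $h:\mathbb{R}^n\to\mathbb{R}$ differentiable on an open set containing $\mathcal{S}$ with $L_{\nabla h}$-Lipschitz gradient there; $f:\mathbb{R}^p\to\mathbb{R}\cup\{+\infty\}$ proper, convex, lsc with $K(\mathcal{S})\subseteq\operatorname{int}(\operatorname{dom}f)$ and $f(Kx)>0$ for all $x\in\mathcal{S}$; $\mathcal{S}\cap A^{-1}(\operatorname{dom}g)\ne\emptyset$ and $\inf_{x\in\mathcal{S}}\{g(Ax)+h(x)\}>0$. Notation: $g^*$ Fenchel conjugate, $\iota_{\mathcal{S}}$ indicator of $\mathcal{S}$, $\operatorname{Proj}_{\mathcal{S}}$ Euclidean projection, $\operatorname{prox}_{\varphi,\kappa}(x)=\arg\min_y\{\varphi(y)+\frac1{2\kappa}\|y-x\|^2\}$, $\Psi(x,z,u,\delta,\gamma):=\langle z,Ax\rangle-g^*(z)+h(x)+\iota_{\mathcal{S}}(x)+\frac{\delta}{2}\|x-u\|^2-\frac{\gamma}{2}\|z\|^2$. Algorithm: given $0<\beta<2$, $\nu>0$, $0<q<1$, $\delta_0,\theta_0>0$,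 $\gamma_0=1$, $\varepsilon>0$ and $(x^0,z^0,u^0)$, for $k\ge0$: choose $y^{k+1}\in\partial f(Kx^k)$; $x^{k+1}:=\operatorname{Proj}_{\mathcal{S}}(u^k+\frac{\theta_k}{\delta_k}K^*y^{k+1}-\frac1{\delta_k}\nabla h(x^k)-\frac1{\delta_k}A^*z^k)$; $u^{k+1}:=(1-\beta)u^k+\beta x^{k+1}$; take the smallest $j_k\ge0$ such that with $\gamma_{k,j_k}:=\gamma_kq^{j_k}$, $z^{k+1,j_k}:=\operatorname{prox}_{g^*,1/\gamma_{k,j_k}}(Ax^{k+1}/\gamma_{k,j_k})$ one has $\theta_{k+1}:=\Psi(x^{k+1},z^{k+1,j_k},u^{k+1},\delta_k,\gamma_{k,j_k})/f(Kx^{k+1})>0$; set $\gamma_{k+1}:=\gamma_{k,j_k}$, $\delta_{k+1}:=2\nu+L_{\nabla h}+2\|A\|^2/\gamma_{k+1}$, $z^{k+1}:=z^{k+1,j_k}$; if $\|z^{k+1}\|>\min(\varepsilon/\gamma_{k+1},\sqrt{2\varepsilon/\gamma_{k+1}})$, replace $\gamma_{k+1}$ by $\gamma_{k+1}q$ and recompute $\delta_{k+1}$ by the same formula. *)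

(* Defs.v *)
(* Vectors of R^n are column vectors
   'cV[R]_n, linear maps are matrices, adjoints are transposes. *)
From HB Require Import structures.
From mathcomp Require Import all_boot all_order all_algebra.
From mathcomp Require Import all_classical all_reals all_analysis.
Set Implicit Arguments. Unset Strict Implicit. Unset Printing Implicit Defensive.
Import Order.TTheory GRing.Theory Num.Theory.
Import numFieldNormedType.Exports.
Local Open Scope classical_set_scope.
Local Open Scope ring_scope.

Section Defs.
Variable R : realType.

Definition dotv (n : nat) (u v : 'cV[R]_n) : R := \sum_(i < n) u i 0 * v i 0.
Definition enorm (n : nat) (v : 'cV[R]_n) : R := Num.sqrt (dotv v v).

Definition opnorm (m n : nat) (A : 'M[R]_(m, n)) : R :=
  sup [set enorm (A *m x) | x in [set x : 'cV[R]_n | enorm x <= 1]].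

Definition grad (n : nat) (h : 'cV[R]_n -> R) (x : 'cV[R]_n) : 'cV[R]_n :=
  \col_(i < n) ('d h x (delta_mx i 0 : 'cV[R]_n)).

Local Open Scope ereal_scope.

Definition edom (n : nat) (f : 'cV[R]_n -> \bar R) : set 'cV[R]_n :=
  [set x | f x < +oo].

Definition eproper (n : nat) (f : 'cV[R]_n -> \bar R) : Prop :=
  (exists x, f x < +oo) /\ (forall x, -oo < f x).

Definition econvex (n : nat) (f : 'cV[R]_n -> \bar R) : Prop :=
  forall (x y : 'cV[R]_n) (t : R), (0 <= t <= 1)%R -> f x < +oo -> f y < +oo ->
    f (t *: x + (1 - t) *: y)%R <= t%:E * f x + (1 - t)%:E * f y.

Definition fconj (n : nat) (g : 'cV[R]_n -> \bar R) (z : 'cV[R]_n) : \bar R :=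
  ereal_sup [set (dotv z w)%:E - g w | w in [set: 'cV[R]_n]].

Definition indic (n : nat) (S : set 'cV[R]_n) (x : 'cV[R]_n) : \bar R :=
  if `[< S x >] then 0 else +oo.

Definition is_subgrad (n : nat) (f : 'cV[R]_n -> \bar R) (w y : 'cV[R]_n) : Prop :=
  forall v, f w + (dotv y (v - w)%R)%:E <= f v.

Definition is_proj (n : nat) (S : set 'cV[R]_n) (v p : 'cV[R]_n) : Prop :=
  S p /\ forall y, S y -> (enorm (p - v) <= enorm (y - v))%R.

Definition is_prox (n : nat) (phi : 'cV[R]_n -> \bar R) (kappa : R)
    (x p : 'cV[R]_n) : Prop :=
  forall y, phi p + ((2 * kappa)^-1 * enorm (p - x) ^+ 2)%:E
            <= phi y + ((2 * kappa)^-1 * enorm (y - x) ^+ 2)%:E.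

Definition Psi (n s : nat) (A : 'M[R]_(s, n)) (g : 'cV[R]_s -> \bar R)
    (h : 'cV[R]_n -> R) (S : set 'cV[R]_n)
    (x : 'cV[R]_n) (z : 'cV[R]_s) (u : 'cV[R]_n) (delta gamma : R) : \bar R :=
  (dotv z (A *m x))%:E - fconj g z + (h x)%:E + indic S x
  + (delta / 2 * enorm (x - u) ^+ 2)%:E - (gamma / 2 * enorm z ^+ 2)%:E.

End Defs.

(* Main.v *)
Require Import Defs.
From HB Require Import structures.
From mathcomp Require Import all_boot all_order all_algebra.
From mathcomp Require Import all_classical all_reals all_analysis.
From mathcomp Require Import ring lra.
Import Order.TTheory GRing.Theory Num.Theory.
Import numFieldNormedType.Exports.
Local Open Scope classical_set_scope.
Local Open Scope ring_scope.
Lemma cross_convex (R : realType) (p : nat) (C : set 'cV[R]_p) (w : 'cV[R]_p) (d : R) :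
  0 < d ->
  (forall a b (t : R), 0 <= t <= 1 -> C a -> C b -> C (t *: a + (1 - t) *: b)) ->
  C w ->
  (forall (i : 'I_p) (c : R), `|c| = d -> C (w + c *: delta_mx i 0)) ->
  forall v : 'cV[R]_p, \sum_i `|v i 0| < d -> C (w + v).
Proof.
move=> d0 Cconv Cw Ce.
suff H : forall k (v : 'cV[R]_p), \sum_i `|v i 0| < d ->
    (forall i : 'I_p, (k <= i)%N -> v i 0 = 0) -> C (w + v).
  by move=> v hv; apply: (H p v hv) => i; rewrite leqNgt ltn_ord.
elim=> [|k IH] v hv hsupp.
  have -> : v = 0 by apply/matrixP => i j; rewrite (ord1 j) mxE hsupp.
  by rewrite addr0.
have [kp|kp] := ltnP k p; last first.
  apply: IH hv _ => i ki; have := ltn_ord i.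
  by rewrite ltnNge (leq_trans kp ki).
pose ik : 'I_p := Ordinal kp.
pose a := `|v ik 0|.
pose e := (delta_mx ik 0 : 'cV[R]_p).
pose v' := v - v ik 0 *: e.
have v'E : forall i, v' i 0 = if i == ik then 0 else v i 0.
  move=> i; rewrite /v' /e !mxE eqxx andbT.
  by case: eqP => [->|_]; rewrite ?mulr1 ?subrr ?mulr0 ?subr0.
have ha : a + \sum_i `|v' i 0| = \sum_i `|v i 0|.
  rewrite [RHS](bigD1 ik) //= [X in _ + X = _](bigD1 ik) //= v'E eqxx normr0 add0r.
  congr (_ + _); apply: eq_bigr => i /negbTE hi; by rewrite v'E hi.
have s0 : 0 <= \sum_i `|v' i 0| by apply: sumr_ge0 => i _.
have ad : a < d.
  by rewrite -ha in hv; apply: le_lt_trans hv; rewrite lerDl.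
have a0 : 0 <= a by rewrite /a normr_ge0.
pose t := 1 - a / d.
have t0 : 0 < t by rewrite /t subr_gt0 ltr_pdivrMr // mul1r.
have t1 : t <= 1 by rewrite /t lerBlDr lerDl divr_ge0 // ltW.
pose c := if v ik 0 < 0 then - d else d.
have hc : `|c| = d.
  by rewrite /c; case: ifP => _; rewrite ?normrN gtr0_norm.
have hca : (1 - t) * c = v ik 0.
  rewrite /t /c /a opprB addrC subrK; case: ifP => h.
    by rewrite ltr0_norm // mulrN divfK ?gt_eqF // opprK.
  by rewrite ger0_norm ?leNgt ?h // divfK ?gt_eqF.
have eq : w + v = t *: (w + t^-1 *: v') + (1 - t) *: (w + c *: e).
  apply/matrixP => i j; rewrite (ord1 j) !mxE. set D := _%:R. rewrite !mulrDr !mulrA mulfV ?gt_eqF // mul1r hca. ring.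
rewrite eq; apply: Cconv.
- by rewrite (ltW t0) t1.
- apply: IH.
    rewrite (eq_bigr (fun i => t^-1 * `|v' i 0|)); last first.
      by move=> i _; rewrite mxE normrM gtr0_norm // invr_gt0.
    rewrite -mulr_sumr ltr_pdivrMl // /t mulrBl mul1r divfK ?gt_eqF //.
    rewrite -ha in hv; rewrite ltrBrDl; exact: hv.
  move=> i ki; rewrite mxE v'E; case: eqP => [_|hi]; first by rewrite mulr0.
  rewrite hsupp ?mulr0 //; rewrite ltn_neqAle ki andbT.
  by apply/eqP => hk; apply: hi; apply: val_inj; rewrite /= hk.
- exact: Ce.
Qed.

Lemma entry_le_norm (R : realType) (m n : nat) (M : 'M[R]_(m, n)) i j :
  `|M i j| <= `|M|.
Proof.
rewrite [leRHS]/Num.Def.normr /= mx_normrE.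
exact: (le_bigmax _ (fun ij : 'I_m * 'I_n => `|M ij.1 ij.2|) (i, j)).
Qed.

Lemma delta_norm_le1 (R : realType) (p : nat) (i : 'I_p) :
  `|(delta_mx i 0 : 'cV[R]_p)| <= 1.
Proof.
rewrite [leLHS]/Num.Def.normr /= mx_normrE.
apply: bigmax_le => // -[a b] _; rewrite mxE.
by case: (_ && _); rewrite ?normr1 ?normr0.
Qed.

Lemma loc_ub (R : realType) (p : nat) (f : 'cV[R]_p -> \bar R) (w : 'cV[R]_p) :
  eproper f -> econvex f -> interior (edom f) w ->
  exists c : R, nbhs w [set v | (f v <= c%:E)%E].
Proof.
move=> [_ fninf] fconv /nbhs_ballP [r r0 rsub].
have fin : forall v, edom f v -> f v = (fine (f v))%:E.
  by move=> v hv; rewrite fineK // fin_real // fninf hv.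
pose d := r / 2.
have d0 : 0 < d by rewrite divr_gt0.
have inball : forall (i : 'I_p) (c : R), `|c| = d -> edom f (w + c *: delta_mx i 0).
  move=> i c hc; apply: rsub; rewrite -ball_normE /=.
  rewrite opprD addrA subrr add0r normrN normrZ hc.
  apply: (@le_lt_trans _ _ d); last by rewrite /d ltr_pdivrMr // ltr_pMr // ltr1n.
  by rewrite ler_piMr ?(ltW d0) ?delta_norm_le1.
have win : edom f w by apply: rsub; exact: ballxx.
pose M := \big[Num.max/fine (f w)]_(i < p)
   Num.max (fine (f (w + d *: delta_mx i 0))) (fine (f (w + (- d) *: delta_mx i 0))).
pose C := [set v | (f v <= M%:E)%E].
have H := @cross_convex R p C w d d0.
have Hc : forall v : 'cV[R]_p, \sum_i `|v i 0| < d -> C (w + v).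
  apply: H.
  - move=> a b t ht Ca Cb.
    have fa : (f a < +oo)%E by apply: le_lt_trans Ca (ltry M).
    have fb : (f b < +oo)%E by apply: le_lt_trans Cb (ltry M).
    apply: le_trans (fconv a b t ht fa fb) _.
    move: Ca Cb; rewrite /C /= (fin a fa) (fin b fb) -!EFinM -EFinD !lee_fin.
    move: ht => /andP[t0 t1] Ca Cb; nra.
  - by rewrite /C /= (fin w win) lee_fin; apply/bigmax_geP; left.
  - move=> i c hc; rewrite /C /= (fin _ (inball i c hc)) lee_fin.
    apply/bigmax_geP; right; exists i => //.
    have : c = d \/ c = - d.
      move: hc; case: (lerP 0 c) => hc0; [rewrite ger0_norm // | rewrite ltr0_norm //] => <-.
        by left.
      by right; rewrite opprK.
    by case=> ->; rewrite le_max lexx ?orbT.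
exists M; apply/nbhs_ballP; exists (d / p.+1%:R).
  by rewrite /= divr_gt0 // ltr0n.
move=> y hy; rewrite -ball_normE /= in hy.
rewrite -(subrKC w y); apply: Hc.
apply: (@le_lt_trans _ _ (\sum_(i < p) (d / p.+1%:R))).
  apply: ler_sum => i _; apply: le_trans (ltW hy).
  by rewrite -normrN opprB; exact: entry_le_norm.
by rewrite sumr_const card_ord -[_ *+ p]mulr_natl mulrA ltr_pdivrMr ?ltr0n // mulrC ltr_pM2l // ltr_nat ltnSn.
Qed.

Lemma Kpull (R : realType) (p n : nat) (K : 'M[R]_(p, n)) (x0 : 'cV[R]_n)
  (V : set 'cV[R]_p) : nbhs (K *m x0) V -> nbhs x0 [set y | V (K *m y)].
Proof.
move=> /nbhs_ballP [e e0 eV]; apply/nbhs_ballP.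
pose C := n%:R * `|K| + 1.
have C0 : 0 < C by rewrite /C ltr_wpDl // mulr_ge0.
exists (e / C); first by rewrite /= divr_gt0.
move=> y hy; rewrite -ball_normE /= in hy; apply: eV; rewrite -ball_normE /=.
rewrite -mulmxBr.
apply: (@le_lt_trans _ _ (C * `|x0 - y|)); last by rewrite mulrC -ltr_pdivlMr.
rewrite [leLHS]/Num.Def.normr /= mx_normrE.
apply: bigmax_le; first by rewrite mulr_ge0 // ltW.
move=> [i j] _ /=; rewrite mxE.
apply: le_trans (ler_norm_sum _ _ _) _.
apply: (@le_trans _ _ (\sum_(l < n) `|K| * `|x0 - y|)).
  apply: ler_sum => l _; rewrite normrM; apply: ler_pM => //; exact: entry_le_norm.
rewrite sumr_const card_ord -mulr_natl mulrA /C mulrDl mul1r lerDl.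
by [].
Qed.
Theorem lemma5p1 (R : realType) (n s p : nat)
  (S : set 'cV[R]_n) (A : 'M[R]_(s, n)) (K : 'M[R]_(p, n))
  (g : 'cV[R]_s -> \bar R) (h : 'cV[R]_n -> R) (f : 'cV[R]_p -> \bar R)
  (U : set 'cV[R]_n) (L : R)
  (* standing assumptions *)
  (HS0 : S !=set0) (HSconv : convex_set S) (HScomp : compact S)
  (Hgprop : eproper g) (Hgconv : econvex g) (Hglsc : lower_semicontinuous g)
  (HUopen : open U) (HSU : S `<=` U)
  (Hhdiff : forall x, U x -> differentiable h x)
  (HL : 0 <= L)
  (HhLip : forall x y, U x -> U y -> enorm (grad h x - grad h y) <= L * enorm (x - y))
  (Hfprop : eproper f) (Hfconv : econvex f) (Hflsc : lower_semicontinuous f)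
  (HKS : forall x, S x -> interior (edom f) (K *m x))
  (HfKpos : forall x, S x -> (0 < f (K *m x))%E)
  (HSAg : exists x, S x /\ (g (A *m x) < +oo)%E)
  (Hinf : (0 < ereal_inf [set g (A *m x) + (h x)%:E | x in S])%E)
  (* algorithm parameters *)
  (beta nu q eps : R)
  (Hbeta : 0 < beta < 2) (Hnu : 0 < nu) (Hq : 0 < q < 1) (Heps : 0 < eps)
  (* iterates *)
  (x u : nat -> 'cV[R]_n) (z : nat -> 'cV[R]_s) (y : nat -> 'cV[R]_p)
  (theta delta gamma : nat -> R) (j : nat -> nat)
  (Hdelta0 : 0 < delta 0) (Htheta0 : 0 < theta 0) (Hgamma0 : gamma 0 = 1)
  (Hy : forall k, is_subgrad f (K *m x k) (y k.+1))
  (Hx : forall k, is_proj S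
          (u k + (theta k / delta k) *: (K^T *m y k.+1)
               - (delta k)^-1 *: grad h (x k) - (delta k)^-1 *: (A^T *m z k))
          (x k.+1))
  (Hu : forall k, u k.+1 = (1 - beta) *: u k + beta *: x k.+1)
  (Hz : forall k, is_prox (fconj g) (gamma k * q ^+ j k)^-1
          ((gamma k * q ^+ j k)^-1 *: (A *m x k.+1)) (z k.+1))
  (Hjpos : forall k, (0 < Psi A g h S (x k.+1) (z k.+1) (u k.+1) (delta k)
                              (gamma k * q ^+ j k) / f (K *m x k.+1))%E)
  (Htheta : forall k, theta k.+1 = fine (Psi A g h S (x k.+1) (z k.+1) (u k.+1)
                              (delta k) (gamma k * q ^+ j k) / f (K *m x k.+1)))
  (Hjmin : forall k (j' : nat) (z' : 'cV[R]_s), (j' < j k)%N ->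
          is_prox (fconj g) (gamma k * q ^+ j')^-1
            ((gamma k * q ^+ j')^-1 *: (A *m x k.+1)) z' ->
          ~ (0 < Psi A g h S (x k.+1) z' (u k.+1) (delta k)
                     (gamma k * q ^+ j') / f (K *m x k.+1))%E)
  (Hgamma : forall k, gamma k.+1 =
          (if enorm (z k.+1) > Num.min (eps / (gamma k * q ^+ j k))
                                        (Num.sqrt (2 * eps / (gamma k * q ^+ j k)))
           then gamma k * q ^+ j k * q else gamma k * q ^+ j k))
  (Hdelta : forall k, delta k.+1 = 2 * nu + L + 2 * opnorm A ^+ 2 / gamma k.+1)
  (* starting point *)
  (Hx0 : S (x 0)) :
  exists m M : R, 0 < m /\ 0 < M /\
    forall k, (m%:E < f (K *m x k))%E /\ (f (K *m x k) <= M%:E)%E.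
Proof.
have xS : forall k, S (x k) by elim=> // k _; case: (Hx k).
have cov := (compact_near_coveringP S).1 HScomp.
have [Mb [_ HMb]] : \forall i \near (pinfty_nbhs R), S `<=` (fun y => (f (K *m y) <= i%:E)%E).
  apply: cov => x0 Sx0.
  have [c nc] := @loc_ub _ _ _ _ Hfprop Hfconv (HKS x0 Sx0).
  exists ([set y | (f (K *m y) <= c%:E)%E], [set i | c < i]).
    split; first exact: (@Kpull _ _ _ K _ _ nc).
    by exists c; split => //; rewrite num_real.
  move=> [a b] /= [ha hb]; apply: le_trans ha _; rewrite lee_fin ltW //.
have [Mc [_ HMc]] : \forall i \near (pinfty_nbhs R), S `<=` (fun y => ((i^-1)%:E < f (K *m y))%E).
  apply: cov => x0 Sx0.
  have finf : (f (K *m x0) < +oo)%E := nbhs_singleton (HKS x0 Sx0).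
  have fpos := HfKpos x0 Sx0.
  have fE : f (K *m x0) = (fine (f (K *m x0)))%:E.
    by rewrite fineK // fin_real // finf (lt_trans _ fpos) // ltNyr.
  set r := fine (f (K *m x0)) in fE.
  have r0 : 0 < r by rewrite -lte_fin -fE.
  have [V nV HV] : exists2 V, nbhs (K *m x0) V & forall y, V y -> ((r / 2)%:E < f y)%E.
    apply: Hflsc; rewrite fE lte_fin; lra.
  exists ([set y | V (K *m y)], [set i | 2 / r < i]).
    split; first exact: (@Kpull _ _ _ K _ _ nV).
    by exists (2 / r); split => //; rewrite num_real.
  move=> [a b] /= [ha hb]; apply: le_lt_trans (HV _ ha); rewrite lee_fin.
  have b0 : 0 < b by apply: lt_trans hb; rewrite divr_gt0.
  rewrite -div1r ler_pdivrMr //.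
  move: hb; rewrite ltr_pdivrMr // => hb; nra.
exists (Num.max Mc 0 + 1)^-1, (Num.max Mb 0 + 1); split.
  by rewrite invr_gt0 ltr_wpDl // le_max lexx orbT.
split; first by rewrite ltr_wpDl // le_max lexx orbT.
move=> k; split.
  by apply: HMc (xS k); apply: (@le_lt_trans _ _ (Num.max Mc 0)); [rewrite le_max lexx | rewrite ltrDl].
by apply: HMb (xS k); apply: (@le_lt_trans _ _ (Num.max Mb 0)); [rewrite le_max lexx | rewrite ltrDl].
Qed.
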